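(* Let $n\ge2$ be an integer and $a>1$. Define $$F_n(t)=\sum_{j>E_{n-1}}\frac{\exp\big(i t\, j^2\,\mathrm{Log}_1 j\cdots\mathrm{Log}_{n-1}j\cdot(\mathrm{Log}_n j)^a\big)}{j\,\mathrm{Log}_1 j\cdots\mathrm{Log}_{n-1}j\cdot(\mathrm{Log}_n j)^a},\qquad t\in\mathbb{R},$$ the sum running over integers $j>E_{n-1}$. Then $F_n$, $\operatorname{Re}F_n$ and $\operatorname{Im}F_n$ are continuous on $\mathbb{R}$ but differentiable at no point of $\mathbb{R}$. (For $n=2$ this is $F_2(t)=\sum_{j\ge3}\exp(it j^2\log j(\log\log j)^a)/(j\log j(\log\log j)^a)$.)
   Context: $\mathrm{Log}_1=\log$ and $\mathrm{Log}_k=\log\circ\mathrm{Log}_{k-1}$ is the $k$-fold iterated natural logarithm. $E_0=1$ and $E_k=\exp(E_{k-1})$, so $E_1=e$, $E_2=e^e$, etc.; $\mathrm{Log}_k t$ is defined and positive for $t>E_{k-1}$. *)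

(* Defs.v *)
From Stdlib Require Import Reals.
Open Scope R_scope.

Fixpoint Logk (k : nat) (t : R) : R :=
  match k with O => t | S k' => ln (Logk k' t) end.

Fixpoint Ek (k : nat) : R :=
  match k with O => 1 | S k' => exp (Ek k') end.

Fixpoint prodLog (m : nat) (t : R) : R :=
  match m with O => 1 | S m' => prodLog m' t * Logk (S m') t end.

Definition weight (n : nat) (a j : R) : R :=
  j * prodLog (n - 1) j * Rpower (Logk n j) a.

Definition phase (n : nat) (a j : R) : R :=
  j ^ 2 * prodLog (n - 1) j * Rpower (Logk n j) a.

Definition termRe (n : nat) (a t : R) (j : nat) : R :=
  if Rlt_dec (Ek (n - 1)) (INR j)
  then cos (t * phase n a (INR j)) / weight n a (INR j) else 0.

Definition termIm (n : nat) (a t : R) (j : nat) : R :=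
  if Rlt_dec (Ek (n - 1)) (INR j)
  then sin (t * phase n a (INR j)) / weight n a (INR j) else 0.

Definition partRe (n : nat) (a t : R) (N : nat) : R := sum_f_R0 (termRe n a t) N.
Definition partIm (n : nat) (a t : R) (N : nat) : R := sum_f_R0 (termIm n a t) N.

(* Main.v *)
Require Import Defs.
From Stdlib Require Import Reals Lra Lia Psatz ZArith.
Open Scope R_scope.

Fixpoint ssum (M : nat) (f : nat -> R) : R :=
  match M with O => 0 | S m => ssum m f + f m end.

Lemma ssum_ext M f g : (forall i, (i < M)%nat -> f i = g i) -> ssum M f = ssum M g.
Proof. induction M; intros H; simpl; auto. rewrite IHM by (intros; apply H; lia). rewrite (H M) by lia. reflexivity. Qed.

Lemma ssum_plus M f g : ssum M (fun i => f i + g i) = ssum M f + ssum M g.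
Proof. induction M; simpl; [lra| rewrite IHM; ring]. Qed.

Lemma ssum_minus M f g : ssum M (fun i => f i - g i) = ssum M f - ssum M g.
Proof. induction M; simpl; [lra| rewrite IHM; ring]. Qed.

Lemma ssum_scal M c f : ssum M (fun i => c * f i) = c * ssum M f.
Proof. induction M; simpl; [ring| rewrite IHM; ring]. Qed.

Lemma ssum_scalr M c f : ssum M (fun i => f i * c) = ssum M f * c.
Proof. induction M; simpl; [ring| rewrite IHM; ring]. Qed.

Lemma ssum_const M c : ssum M (fun _ => c) = INR M * c.
Proof. induction M; simpl ssum; [simpl; ring| rewrite IHM, S_INR; ring]. Qed.

Lemma ssum_abs_le M f b : (forall i, (i < M)%nat -> Rabs (f i) <= b) -> Rabs (ssum M f) <= INR M * b.
Proof.
  induction M; intros H; simpl ssum.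
  - simpl. rewrite Rabs_R0. lra.
  - rewrite S_INR. eapply Rle_trans; [apply Rabs_triang|].
    assert (H1 := IHM (fun i Hi => H i ltac:(lia))). assert (H2 := H M ltac:(lia)). lra.
Qed.

Lemma ssum_cv M (u : nat -> nat -> R) (l : nat -> R) :
  (forall i, (i < M)%nat -> Un_cv (u i) (l i)) ->
  Un_cv (fun N => ssum M (fun i => u i N)) (ssum M l).
Proof.
  induction M; intros H; simpl.
  - intros e He. exists O. intros. unfold Rdist. rewrite Rminus_0_r, Rabs_R0. lra.
  - apply CV_plus. apply IHM. intros; apply H; lia. apply H; lia.
Qed.

Lemma tele M a x : 2 * sin (x/2) * ssum M (fun p => cos (a + INR p * x)) =
   sin (a + (INR M - /2) * x) - sin (a - x/2).
Proof.
  induction M; simpl ssum.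
  - change (INR 0) with 0. replace (a + (0 - /2) * x) with (a - x/2) by field. ring.
  - rewrite Rmult_plus_distr_l, IHM, S_INR.
    replace (a + (INR M - /2) * x) with ((a + INR M * x) - x/2) by field.
    replace (a + (INR M + 1 - /2) * x) with ((a + INR M * x) + x/2) by field.
    set (B := a + INR M * x). rewrite (sin_minus B), (sin_plus B). ring.
Qed.

Definition Cs M a x := ssum M (fun p => cos (a + INR p * x)).

Lemma Cs_bound M a x : sin (x/2) <> 0 -> Rabs (Cs M a x) <= / Rabs (sin (x/2)).
Proof.
  intros Hs. assert (Ht := tele M a x). unfold Cs.
  set (s := Rabs (sin (x/2))).
  assert (Hp : 0 < s) by (apply Rabs_pos_lt; auto).
  assert (Hb : Rabs (2 * sin (x/2) * ssum M (fun p => cos (a + INR p * x))) <= 2).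
  { rewrite Ht. eapply Rle_trans; [apply Rabs_triang|]. rewrite Rabs_Ropp.
    assert (Rabs (sin (a + (INR M - /2) * x)) <= 1) by (apply Rabs_le; apply SIN_bound).
    assert (Rabs (sin (a - x/2)) <= 1) by (apply Rabs_le; apply SIN_bound). lra. }
  rewrite !Rabs_mult, (Rabs_pos_eq 2) in Hb by lra.
  set (C := Rabs (ssum M (fun p => cos (a + INR p * x)))) in *. fold s in Hb.
  apply (Rmult_le_reg_l (2 * s)). lra.
  replace (2 * s * / s) with 2 by (field; lra). lra.
Qed.

Lemma Cs_zero M r a x : sin (x/2) <> 0 -> INR M * x = 2 * INR r * PI -> Cs M a x = 0.
Proof.
  intros Hs HM. assert (Ht := tele M a x). unfold Cs in *.
  replace (a + (INR M - /2) * x) with ((a - x/2) + 2 * INR r * PI) in Ht by (rewrite <- HM; field).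
  rewrite sin_period in Ht. rewrite Rminus_diag in Ht.
  apply Rmult_integral in Ht. destruct Ht as [Ht|Ht]; auto. lra.
Qed.

Lemma cos_shift_sin z : cos (z - PI/2) = sin z.
Proof. rewrite cos_minus, cos_PI2, sin_PI2. ring. Qed.

Definition U M a x := ssum M (fun p => ssum M (fun q => cos (a + (INR p - INR q) * x))).
Definition V M a x := ssum M (fun p => ssum M (fun q => (INR p - INR q) * cos (a + (INR p - INR q) * x))).

Lemma U_split M a x : U M a x = Cs M a x * Cs M 0 x + Cs M (a - PI/2) x * Cs M (0 - PI/2) x.
Proof.
  unfold U, Cs.
  transitivity (ssum M (fun p => cos (a + INR p * x) * ssum M (fun q => cos (0 + INR q * x)) +
                   cos (a - PI/2 + INR p * x) * ssum M (fun q => cos (0 - PI/2 + INR q * x)))).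
  - apply ssum_ext; intros p _. rewrite <- !ssum_scal, <- ssum_plus. apply ssum_ext; intros q _.
    replace (a + (INR p - INR q) * x) with ((a + INR p * x) - (0 + INR q * x)) by ring.
    replace (a - PI/2 + INR p * x) with ((a + INR p * x) - PI/2) by ring.
    replace (0 - PI/2 + INR q * x) with ((0 + INR q * x) - PI/2) by ring.
    rewrite !cos_shift_sin, cos_minus. ring.
  - rewrite ssum_plus, !ssum_scalr. ring.
Qed.

Lemma V_zero M x : (forall a, Cs M a x = 0) -> forall a, V M a x = 0.
Proof.
  intros H a. unfold V.
  assert (E: forall p, ssum M (fun q => (INR p - INR q) * cos (a + (INR p - INR q) * x)) =
     INR p * cos (a + INR p * x) * Cs M 0 x + INR p * cos (a - PI/2 + INR p * x) * Cs M (0 - PI/2) x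
     - cos (a + INR p * x) * ssum M (fun q => INR q * cos (0 + INR q * x))
     - cos (a - PI/2 + INR p * x) * ssum M (fun q => INR q * cos (0 - PI/2 + INR q * x))).
  { intros p. unfold Cs. rewrite <- !ssum_scal, <- !ssum_plus, <- !ssum_minus. apply ssum_ext; intros q _.
    replace (a + (INR p - INR q) * x) with ((a + INR p * x) - (0 + INR q * x)) by ring.
    replace (a - PI/2 + INR p * x) with ((a + INR p * x) - PI/2) by ring.
    replace (0 - PI/2 + INR q * x) with ((0 + INR q * x) - PI/2) by ring.
    rewrite !cos_shift_sin, cos_minus. ring. }
  rewrite (ssum_ext _ _ _ (fun p _ => E p)).
  rewrite !H. rewrite !ssum_minus.
  rewrite !ssum_scalr. fold (Cs M a x). fold (Cs M (a - PI/2) x). rewrite !H.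
  replace (ssum M (fun i => INR i * cos (a + INR i * x) * 0 + INR i * cos (a - PI / 2 + INR i * x) * 0))
    with (ssum M (fun i => 0 * 0)) by (apply ssum_ext; intros; ring).
  rewrite ssum_const. ring.
Qed.

Lemma U_zero M x : (forall a, Cs M a x = 0) -> forall a, U M a x = 0.
Proof. intros H a. rewrite U_split, !H. ring. Qed.

Lemma U_bound_triv M a x : Rabs (U M a x) <= INR M ^ 2.
Proof.
  unfold U. replace (INR M ^ 2) with (INR M * INR M) by ring.
  apply ssum_abs_le. intros p _. replace (INR M) with (INR M * 1) by ring.
  apply ssum_abs_le. intros. apply Rabs_le. apply COS_bound.
Qed.

Lemma U_bound M a x : sin (x/2) <> 0 -> Rabs (U M a x) <= 2 / (sin (x/2))^2.
Proof.
  intros Hs. rewrite U_split.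
  assert (H1 := Cs_bound M a x Hs). assert (H2 := Cs_bound M 0 x Hs).
  assert (H3 := Cs_bound M (a - PI/2) x Hs). assert (H4 := Cs_bound M (0 - PI/2) x Hs).
  set (s := Rabs (sin (x/2))) in *.
  assert (Hp : 0 < s) by (apply Rabs_pos_lt; auto).
  replace ((sin (x/2))^2) with (s * s) by (unfold s; rewrite <- Rabs_mult, Rabs_pos_eq; [ring| nra]).
  eapply Rle_trans; [apply Rabs_triang|]. rewrite !Rabs_mult.
  assert (0 <= Rabs (Cs M a x)) by apply Rabs_pos. assert (0 <= Rabs (Cs M 0 x)) by apply Rabs_pos.
  assert (0 <= Rabs (Cs M (a - PI/2) x)) by apply Rabs_pos. assert (0 <= Rabs (Cs M (0-PI/2) x)) by apply Rabs_pos.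
  replace (2 / (s*s)) with (/s * /s + /s * /s) by (field; lra).
  apply Rplus_le_compat; apply Rmult_le_compat; auto.
Qed.

Lemma U_00 M : U M 0 0 = INR M ^ 2.
Proof.
  unfold U. replace (INR M ^ 2) with (INR M * (INR M * 1)) by ring.
  rewrite <- ssum_const. apply ssum_ext; intros. rewrite <- ssum_const. apply ssum_ext; intros.
  rewrite Rmult_0_r, Rplus_0_r, cos_0. reflexivity.
Qed.

Lemma lim_le (u : nat -> R) L x b :
  Un_cv u L -> (exists N0, forall N, (N0 <= N)%nat -> Rabs (u N - x) <= b) -> Rabs (L - x) <= b.
Proof.
  intros Hu [N0 HN]. apply Rnot_lt_le. intros Hlt.
  destruct (Hu (Rabs (L - x) - b)) as [N1 HN1]. lra.
  specialize (HN1 (max N0 N1) ltac:(lia)). specialize (HN (max N0 N1) ltac:(lia)).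
  unfold Rdist in HN1.
  assert (Rabs (L - x) <= Rabs (u (max N0 N1) - L) + Rabs (u (max N0 N1) - x)).
  { replace (L - x) with (-(u (max N0 N1) - L) + (u (max N0 N1) - x)) by ring.
    eapply Rle_trans; [apply Rabs_triang|]. rewrite Rabs_Ropp. lra. }
  lra.
Qed.

Lemma sin_lower y : 0 < y -> y <= 1 -> y/2 <= sin y.
Proof.
  intros H0 H1. assert (HP : 3 < PI) by (assert (HH := PI2_3_2); lra).
  destruct (sin_bound y 0 ltac:(lra) ltac:(lra)) as [Hs _].
  simpl in Hs. unfold sin_approx in Hs. simpl in Hs. unfold sin_term in Hs. simpl in Hs.
  assert (y * y * y <= y) by nra. 
  eapply Rle_trans; [|apply Hs]. unfold Rdiv. rewrite ?Rinv_1. nra.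
Qed.

Lemma sin_sq_lower y : y <> 0 -> y^2 <= 1 -> y^2/4 <= (sin y)^2.
Proof.
  intros H0 H1. destruct (Rlt_or_le 0 y).
  - assert (y <= 1) by nra. assert (Hs := sin_lower y H ltac:(lra)). nra.
  - assert (0 < -y) by lra. assert (-y <= 1) by nra. assert (Hs := sin_lower (-y) H2 H3).
    rewrite sin_neg in Hs. nra.
Qed.

Lemma U_decay M a x Y : 0 < Y -> Y <= (x/2)^2 -> (x/2)^2 <= 1 -> Rabs (U M a x) <= 8 / Y.
Proof.
  intros HY H1 H2. assert (Hx : x/2 <> 0) by (intro E; rewrite E in H1; nra).
  assert (Hs := sin_sq_lower (x/2) Hx H2).
  assert (Hs0 : sin (x/2) <> 0) by (intro E; rewrite E in Hs; nra).
  eapply Rle_trans; [apply U_bound; auto|].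
  apply (Rmult_le_reg_l ((sin (x/2))^2 * Y)). nra.
  replace ((sin (x / 2)) ^ 2 * Y * (2 / (sin (x / 2)) ^ 2)) with (2 * Y) by (field; nra).
  replace ((sin (x / 2)) ^ 2 * Y * (8 / Y)) with (8 * (sin (x/2))^2) by (field; lra). nra.
Qed.

Lemma nat_between x : 0 <= x -> exists r : nat, x <= INR r <= x + 1.
Proof.
  intros Hx. destruct (archimed x) as [H1 H2].
  assert (Hz : (0 <= up x)%Z) by (apply le_IZR; lra).
  exists (Z.to_nat (up x)). rewrite INR_IZR_INZ, Z2Nat.id by auto. lra.
Qed.

Lemma bound_fin (f : nat -> R) J : exists L, 0 <= L /\ forall j, (j <= J)%nat -> Rabs (f j) <= L.
Proof.
  induction J.
  - exists (Rabs (f O)). split; [apply Rabs_pos|]. intros j Hj. replace j with O by lia. lra.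
  - destruct IHJ as [L [HL H]]. exists (Rmax L (Rabs (f (S J)))). split.
    + eapply Rle_trans; [apply HL| apply Rmax_l].
    + intros j Hj. destruct (Nat.eq_dec j (S J)). subst; apply Rmax_r.
      eapply Rle_trans; [apply H; lia| apply Rmax_l].
Qed.

Lemma sum_ind (k : nat) v N : (k <= N)%nat ->
  sum_f_R0 (fun j => if Nat.eq_dec j k then v else 0) N = v.
Proof.
  induction N; intros H.
  - simpl. replace k with O by lia. reflexivity.
  - rewrite tech5. destruct (Nat.eq_dec (S N) k).
    + subst. rewrite (sum_eq _ (fun _ => 0)). rewrite sum_cte. ring.
      intros i Hi. destruct (Nat.eq_dec i (S N)); [lia| auto].
    + rewrite IHN by lia. ring.
Qed.

Definition Top M t0 d a0 th (f : R -> R) :=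
  ssum M (fun p => ssum M (fun q => f (t0 + (INR p - INR q) * d) * cos (a0 + (INR p - INR q) * th))).

Lemma Top_plus M t0 d a0 th f g :
  Top M t0 d a0 th (fun s => f s + g s) = Top M t0 d a0 th f + Top M t0 d a0 th g.
Proof.
  unfold Top. rewrite <- ssum_plus. apply ssum_ext; intros. rewrite <- ssum_plus. apply ssum_ext; intros. ring.
Qed.

Lemma Top_scal M t0 d a0 th c f :
  Top M t0 d a0 th (fun s => c * f s) = c * Top M t0 d a0 th f.
Proof.
  unfold Top. rewrite <- ssum_scal. apply ssum_ext; intros. rewrite <- ssum_scal. apply ssum_ext; intros. ring.
Qed.

Lemma Top_minus M t0 d a0 th f g :
  Top M t0 d a0 th (fun s => f s - g s) = Top M t0 d a0 th f - Top M t0 d a0 th g.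
Proof.
  unfold Top. rewrite <- ssum_minus. apply ssum_ext; intros. rewrite <- ssum_minus. apply ssum_ext; intros. ring.
Qed.

Lemma Top_cv M t0 d a0 th (G : nat -> R -> R) F :
  (forall s, Un_cv (fun N => G N s) (F s)) ->
  Un_cv (fun N => Top M t0 d a0 th (G N)) (Top M t0 d a0 th F).
Proof.
  intros H. unfold Top.
  apply (ssum_cv M (fun p N => ssum M (fun q => G N (t0 + (INR p - INR q) * d) * cos (a0 + (INR p - INR q) * th)))).
  intros p _.
  apply (ssum_cv M (fun q N => G N (t0 + (INR p - INR q) * d) * cos (a0 + (INR p - INR q) * th))).
  intros q _. apply (CV_mult (fun N => G N (t0 + (INR p - INR q) * d)) (fun _ => cos (a0 + (INR p - INR q) * th))).
  apply H. intros e He. exists O. intros. unfold Rdist. rewrite Rminus_diag, Rabs_R0. lra.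
Qed.

Lemma Top_cos M t0 d lj lk b :
  Top M t0 d (lk * t0 - b) (lk * d) (fun s => cos (lj * s - b)) =
  /2 * (U M ((lj - lk) * t0) ((lj - lk) * d) + U M ((lj + lk) * t0 - 2 * b) ((lj + lk) * d)).
Proof.
  unfold Top, U. rewrite <- ssum_plus, <- ssum_scal. apply ssum_ext; intros p _.
  rewrite <- ssum_plus, <- ssum_scal. apply ssum_ext; intros q _.
  set (s := t0 + (INR p - INR q) * d).
  replace (lk * t0 - b + (INR p - INR q) * (lk * d)) with (lk * s - b) by (unfold s; ring).
  replace ((lj - lk) * t0 + (INR p - INR q) * ((lj - lk) * d)) with ((lj * s - b) - (lk * s - b)) by (unfold s; ring).
  replace ((lj + lk) * t0 - 2 * b + (INR p - INR q) * ((lj + lk) * d)) with ((lj * s - b) + (lk * s - b)) by (unfold s; ring).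
  rewrite (cos_minus (lj * s - b) (lk * s - b)), (cos_plus (lj * s - b) (lk * s - b)). field.
Qed.

Lemma Top_bound M t0 d a0 th f B :
  (forall p q, (p < M)%nat -> (q < M)%nat -> Rabs (f (t0 + (INR p - INR q) * d)) <= B) ->
  Rabs (Top M t0 d a0 th f) <= INR M * (INR M * B).
Proof.
  intros H. unfold Top. apply ssum_abs_le. intros p Hp. apply ssum_abs_le. intros q Hq.
  rewrite Rabs_mult. assert (Rabs (cos (a0 + (INR p - INR q) * th)) <= 1) by (apply Rabs_le; apply COS_bound).
  specialize (H p q Hp Hq). assert (0 <= Rabs (f (t0 + (INR p - INR q) * d))) by apply Rabs_pos.
  nra.
Qed.

Lemma PI_gt3 : 3 < PI.
Proof. assert (HH := PI2_3_2); lra. Qed.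

Lemma z_bound M (Mr r C kr jr z lk Lam a : R) :
 Mr = INR M -> 0 < lk -> 1 <= kr -> C*kr <= r -> 1 <= C -> 0 < Mr -> jr <> kr ->
 (jr - kr)^2 * lk^2 <= z^2 * kr^2 -> Rabs z <= Lam + lk -> 0 <= Lam -> 4*r*(Lam+lk) <= Mr*lk ->
 Rabs (U M a (z * (2*PI*r/(Mr*lk)))) <= Mr^2 / (C^2 * (jr-kr)^2).
Proof.
  intros HM Hlk Hk Hr HC HMp Hjk Hsep Hz HL HMb.
  assert (HP := PI_gt3). assert (HP4 := PI_4).
  assert (Hd : 0 < (jr - kr)^2) by (assert (jr - kr <> 0) by lra; nra).
  set (Y := (jr-kr)^2 * PI^2 * C^2 / Mr^2).
  assert (HP2 : 0 < PI^2) by nra. assert (HC2 : 0 < C^2) by nra.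
  assert (HY : 0 < Y) by (unfold Y, Rdiv; apply Rmult_lt_0_compat; [apply Rmult_lt_0_compat; [apply Rmult_lt_0_compat|]|]; auto; apply Rinv_0_lt_compat; nra).
  assert (Hx : (z * (2*PI*r/(Mr*lk)) / 2)^2 = z^2 * r^2 * PI^2 / (Mr^2 * lk^2)) by (field; lra).
  assert (Hr0 : 0 <= r) by nra.
  assert (Hz2 : z^2 * r^2 >= (jr-kr)^2 * C^2 * lk^2).
  { assert (Hck : 0 <= C*kr) by nra. assert (Hpi : (C*kr)^2 <= r^2) by (apply pow_incr; lra).
    assert (r^2 >= C^2 * kr^2) by (rewrite <- Rpow_mult_distr; lra).
    assert (z^2 * r^2 >= z^2 * (C^2 * kr^2)) by (apply Rle_ge, Rmult_le_compat_l; [nra|lra]).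
    nra. }
  assert (Hz3 : z^2 * r^2 * PI^2 <= Mr^2 * lk^2).
  { assert (Habs : Rabs z * r * PI <= Mr * lk).
    { assert (Rabs z * r * PI <= (Lam + lk) * r * 4).
      { apply Rmult_le_compat; [apply Rmult_le_pos; [apply Rabs_pos|lra] | lra | apply Rmult_le_compat_r; auto | lra]. }
      lra. }
    assert (0 <= Rabs z * r * PI) by (apply Rmult_le_pos; [apply Rmult_le_pos; [apply Rabs_pos|lra]|lra]).
    assert ((Rabs z * r * PI)^2 <= (Mr * lk)^2) by nra.
    replace (z^2) with (Rabs z ^2) by (rewrite RPow_abs, Rabs_pos_eq; [auto| nra]). nra. }
  assert (HMl : 0 < Mr^2 * lk^2) by (apply Rmult_lt_0_compat; apply pow_lt; lra).
  eapply Rle_trans; [apply (U_decay M a _ Y HY)|].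
  - rewrite Hx. unfold Y. apply (Rmult_le_reg_r (Mr^2 * lk^2)); [exact HMl|].
    replace ((jr - kr) ^ 2 * PI ^ 2 * C ^ 2 / Mr ^ 2 * (Mr ^ 2 * lk ^ 2)) with ((jr-kr)^2 * C^2 * lk^2 * PI^2) by (field; lra).
    replace (z ^ 2 * r ^ 2 * PI ^ 2 / (Mr ^ 2 * lk ^ 2) * (Mr ^ 2 * lk ^ 2)) with (z^2 * r^2 * PI^2) by (field; lra).
    apply Rmult_le_compat_r; nra.
  - rewrite Hx. apply (Rmult_le_reg_r (Mr^2 * lk^2)); [exact HMl|].
    replace (z ^ 2 * r ^ 2 * PI ^ 2 / (Mr ^ 2 * lk ^ 2) * (Mr ^ 2 * lk ^ 2)) with (z^2 * r^2 * PI^2) by (field; lra).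
    lra.
  - unfold Y. replace (8 / ((jr - kr) ^ 2 * PI ^ 2 * C ^ 2 / Mr ^ 2)) with (Mr^2 / (C^2 * (jr-kr)^2) * (8 / PI^2)) by (field; nra).
    assert (0 < C^2 * (jr-kr)^2) by nra.
    assert (0 <= Mr^2 / (C^2 * (jr-kr)^2)) by (apply Rmult_le_pos; [nra| apply Rlt_le, Rinv_0_lt_compat; auto]).
    assert (8 / PI^2 <= 1) by (apply (Rmult_le_reg_r (PI^2)); [nra|]; unfold Rdiv; rewrite Rmult_assoc, Rinv_l; nra).
    nra.
Qed.

Definition gterm (c lam : nat -> R) (b t : R) (j : nat) := c j * cos (lam j * t - b).
Definition qsum (c : nat -> R) (k N : nat) :=
  sum_f_R0 (fun j => if Nat.eq_dec j k then 0 else c j / (INR j - INR k)^2) N.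

Theorem gen_nd (c lam : nat -> R) (b : R) (F : R -> R) (K : R) :
  (forall j, 0 <= c j) ->
  (forall j, 0 < c j -> 0 <= lam j) ->
  (exists l, Un_cv (sum_f_R0 c) l) ->
  (forall t, Un_cv (sum_f_R0 (gterm c lam b t)) (F t)) ->
  0 < K ->
  (forall B, exists k, (1 <= k)%nat /\ 0 < c k /\ c k * lam k = INR k /\ B * INR k <= lam k /\
        (forall j, 0 < c j -> j <> k -> (INR j - INR k)^2 * (lam k)^2 <= (lam j - lam k)^2 * (INR k)^2) /\
        (forall N, qsum c k N <= K * c k)) ->
  forall t l, ~ derivable_pt_lim F t l.
Proof.
  intros Hc Hlam [lc Hlc] HF HK Hgood t0 l Hd.
  assert (HP := PI_gt3). assert (HP4 := PI_4).
  set (C := 8*K+1). assert (HC1 : 1 <= C) by (unfold C; lra).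
  assert (HC8 : 8*K <= C*C) by (unfold C; nra).
  set (eps := /(128*C)). assert (Heps : 0 < eps) by (unfold eps; apply Rinv_0_lt_compat; lra).
  destruct (Hd eps Heps) as [d0 Hd0].
  assert (HD : forall h, Rabs h < d0 -> Rabs (F (t0+h) - F t0 - l*h) <= eps * Rabs h).
  { intros h Hh. destruct (Req_dec h 0) as [E|E].
    - subst. rewrite Rplus_0_r. replace (F t0 - F t0 - l * 0) with 0 by ring. rewrite Rabs_R0. lra.
    - specialize (Hd0 h E Hh).
      replace (F (t0 + h) - F t0 - l * h) with (h * ((F (t0 + h) - F t0) / h - l)) by (field; auto).
      rewrite Rabs_mult, Rmult_comm. apply Rmult_le_compat_r; [apply Rabs_pos|lra]. }
  assert (Hd0p : 0 < d0) by (destruct d0; simpl; lra).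
  destruct (Hgood (32*C/d0)) as [k [Hk1 [Hck [Hckl [HB [Hsep Hq]]]]]].
  assert (Hkr : 1 <= INR k) by (apply (le_INR 1); auto).
  assert (Hlk : 0 < lam k) by nra.
  assert (HB' : 32 * C * INR k <= d0 * lam k).
  { apply (Rmult_le_compat_l d0) in HB; [|lra].
    replace (d0 * (32 * C / d0 * INR k)) with (32 * C * INR k) in HB by (field; lra). lra. }
  destruct (nat_between (C * INR k)) as [r [Hr1 Hr2]]; [nra|].
  assert (Hr : 1 <= INR r) by nra.
  destruct (Hlc (c k / 16)) as [J0 HJ0]; [lra|].
  set (J := max J0 k).
  assert (HkJ : (k <= J)%nat) by (unfold J; lia).
  assert (HJ : forall N, (J <= N)%nat -> sum_f_R0 c N - sum_f_R0 c J <= c k / 8).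
  { intros N HN. assert (H1 := HJ0 N ltac:(unfold J in HN; lia)). assert (H2 := HJ0 J ltac:(unfold J; lia)).
    unfold Rdist in *. apply Rabs_def2 in H1. apply Rabs_def2 in H2. lra. }
  destruct (bound_fin lam J) as [Lam [HL0 HL]].
  destruct (nat_between (4 * INR r * (Lam + lam k) / lam k + 2 * INR r + 1)) as [M [HM1 HM2]].
  { assert (0 <= 4 * INR r * (Lam + lam k) / lam k) by (apply Rmult_le_pos; [nra| apply Rlt_le, Rinv_0_lt_compat; auto]). lra. }
  set (Mr := INR M).
  assert (HM2r : 2 * INR r < Mr).
  { assert (0 <= 4 * INR r * (Lam + lam k) / lam k) by (apply Rmult_le_pos; [nra| apply Rlt_le, Rinv_0_lt_compat; auto]). unfold Mr; lra. }
  assert (HMb : 4 * INR r * (Lam + lam k) <= Mr * lam k).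
  { assert (4 * INR r * (Lam + lam k) / lam k <= Mr) by (unfold Mr; lra).
    apply (Rmult_le_compat_r (lam k)) in H; [|lra].
    replace (4 * INR r * (Lam + lam k) / lam k * lam k) with (4 * INR r * (Lam + lam k)) in H by (field; lra). lra. }
  assert (HMp : 0 < Mr) by lra.
  set (dl := 2 * PI * INR r / (Mr * lam k)).
  set (th := lam k * dl).
  assert (Hth : th = 2 * PI * INR r / Mr) by (unfold th, dl; field; lra).
  set (a0 := lam k * t0 - b).
  set (T := Top M t0 dl a0 th).
  assert (HCth : forall a, Cs M a th = 0).
  { intros a. apply (Cs_zero M r).
    - rewrite Hth. replace (2 * PI * INR r / Mr / 2) with (PI * (INR r / Mr)) by (field; lra).
      apply Rgt_not_eq, sin_gt_0.
      + apply Rmult_lt_0_compat; [lra| apply Rdiv_lt_0_compat; lra].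
      + assert (INR r / Mr < 1) by (apply (Rmult_lt_reg_r Mr); [lra|]; field_simplify; lra). nra.
    - fold Mr. rewrite Hth. field. lra. }
  assert (HC2th : forall a, Cs M a (2 * th) = 0).
  { intros a. apply (Cs_zero M (2 * r)).
    - rewrite Hth. replace (2 * (2 * PI * INR r / Mr) / 2) with (PI * (2 * INR r / Mr)) by (field; lra).
      apply Rgt_not_eq, sin_gt_0.
      + apply Rmult_lt_0_compat; [lra| apply Rdiv_lt_0_compat; lra].
      + assert (2 * INR r / Mr < 1) by (apply (Rmult_lt_reg_r Mr); [lra|]; field_simplify; lra). nra.
    - fold Mr. rewrite Hth, mult_INR. simpl (INR 2). field. lra. }
  assert (HT1 : T (fun _ => 1) = 0).
  { unfold T, Top. rewrite <- (U_zero M th HCth a0). unfold U. apply ssum_ext; intros. apply ssum_ext; intros. ring. }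
  assert (HT2 : T (fun s => s - t0) = 0).
  { unfold T, Top. rewrite <- (Rmult_0_r dl), <- (V_zero M th HCth a0). unfold V. rewrite <- ssum_scal.
    apply ssum_ext; intros. rewrite <- ssum_scal. apply ssum_ext; intros. ring. }
  assert (HTD : T (fun s => F s - F t0 - l * (s - t0)) = T F).
  { unfold T. rewrite Top_minus, Top_minus.
    replace (Top M t0 dl a0 th (fun _ => F t0)) with (F t0 * T (fun _ => 1)).
    2:{ unfold T. rewrite <- Top_scal. unfold Top. apply ssum_ext; intros. apply ssum_ext; intros. ring. }
    rewrite Top_scal. fold T. rewrite HT1, HT2. ring. }
  assert (HMd : Mr * dl < d0).
  { replace (Mr * dl) with (2 * PI * INR r / lam k) by (unfold dl; field; lra).
    apply (Rmult_lt_reg_r (lam k)); [lra|]. replace (2 * PI * INR r / lam k * lam k) with (2 * PI * INR r) by (field; lra).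
    assert (INR r <= 2 * C * INR k) by nra. nra. }
  assert (Hdl : 0 < dl) by (unfold dl; apply Rdiv_lt_0_compat; nra).
  assert (HTup : Rabs (T F) <= Mr * (Mr * (eps * (Mr * dl)))).
  { rewrite <- HTD. unfold T. apply Top_bound. intros p q Hp Hq0.
    assert (Hpq : Rabs (INR p - INR q) <= Mr).
    { apply lt_INR in Hp. apply lt_INR in Hq0. assert (0 <= INR p) by apply pos_INR. assert (0 <= INR q) by apply pos_INR.
      apply Rabs_le. unfold Mr. lra. }
    assert (Hh : Rabs ((INR p - INR q) * dl) <= Mr * dl).
    { rewrite Rabs_mult, (Rabs_pos_eq dl) by lra. apply Rmult_le_compat_r; lra. }
    replace (F (t0 + (INR p - INR q) * dl) - F t0 - l * (t0 + (INR p - INR q) * dl - t0))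
      with (F (t0 + (INR p - INR q) * dl) - F t0 - l * ((INR p - INR q) * dl)) by ring.
    eapply Rle_trans; [apply HD; lra|]. apply Rmult_le_compat_l; lra. }
  set (A := fun j => T (fun s => cos (lam j * s - b))).
  assert (HTP : forall N, T (fun s => sum_f_R0 (gterm c lam b s) N) = sum_f_R0 (fun j => c j * A j) N).
  { induction N.
    - simpl. unfold gterm, A, T. rewrite <- Top_scal. reflexivity.
    - simpl. unfold T. rewrite Top_plus. fold T. rewrite IHN. unfold gterm, A, T. rewrite <- Top_scal. reflexivity. }
  assert (HTcv : Un_cv (fun N => sum_f_R0 (fun j => c j * A j) N) (T F)).
  { eapply Un_cv_ext. intros N. apply HTP. unfold T. apply Top_cv. apply HF. }
  assert (HA : forall j, A j = /2 * (U M ((lam j - lam k) * t0) ((lam j - lam k) * dl) + U M ((lam j + lam k) * t0 - 2 * b) ((lam j + lam k) * dl))).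
  { intros j. unfold A, T, a0, th. apply Top_cos. }
  assert (HAk : A k = Mr^2 / 2).
  { rewrite HA. rewrite Rminus_diag, !Rmult_0_l.
    replace ((lam k + lam k) * dl) with (2 * th) by (unfold th; ring).
    rewrite (U_zero M _ HC2th), U_00. fold Mr. field. }
  assert (HAtriv : forall j, Rabs (A j) <= Mr^2).
  { intros j. rewrite HA. assert (H1 := U_bound_triv M ((lam j - lam k) * t0) ((lam j - lam k) * dl)).
    assert (H2 := U_bound_triv M ((lam j + lam k) * t0 - 2 * b) ((lam j + lam k) * dl)). fold Mr in H1, H2.
    rewrite Rabs_mult, Rabs_pos_eq by lra. eapply Rle_trans. apply Rmult_le_compat_l; [lra| apply Rabs_triang]. lra. }
  assert (HAoff : forall j, (j <= J)%nat -> j <> k -> 0 < c j -> Rabs (A j) <= Mr^2 / (C^2 * (INR j - INR k)^2)).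
  { intros j HjJ Hjk Hcj.
    assert (Hjkr : INR j <> INR k) by (intro E; apply INR_eq in E; auto).
    assert (Hs := Hsep j Hcj Hjk). assert (Hl := Hlam j Hcj). assert (HLj := HL j HjJ).
    assert (Hz1 : Rabs (lam j - lam k) <= Lam + lam k).
    { apply Rabs_le. rewrite Rabs_pos_eq in HLj by lra. lra. }
    assert (Hz2 : Rabs (lam j + lam k) <= Lam + lam k).
    { rewrite Rabs_pos_eq by lra. rewrite Rabs_pos_eq in HLj by lra. lra. }
    assert (Hs2 : (INR j - INR k)^2 * lam k ^2 <= (lam j + lam k)^2 * INR k ^2).
    { assert ((lam j - lam k)^2 <= (lam j + lam k)^2) by nra.
      assert ((lam j - lam k)^2 * INR k^2 <= (lam j + lam k)^2 * INR k^2) by (apply Rmult_le_compat_r; nra). lra. }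
    assert (B1 := z_bound M Mr (INR r) C (INR k) (INR j) (lam j - lam k) (lam k) Lam ((lam j - lam k) * t0)
                   eq_refl Hlk Hkr Hr1 HC1 HMp Hjkr Hs Hz1 HL0 HMb).
    assert (B2 := z_bound M Mr (INR r) C (INR k) (INR j) (lam j + lam k) (lam k) Lam ((lam j + lam k) * t0 - 2 * b)
                   eq_refl Hlk Hkr Hr1 HC1 HMp Hjkr Hs2 Hz2 HL0 HMb).
    fold dl in B1, B2. rewrite HA. rewrite Rabs_mult, (Rabs_pos_eq (/2)) by lra.
    eapply Rle_trans. apply Rmult_le_compat_l; [lra| apply Rabs_triang]. lra. }
  set (e := fun j => if Nat.eq_dec j k then c k * (Mr^2/2) else 0).
  set (bb := fun j => if Nat.eq_dec j k then 0 else if le_dec j J then Mr^2/C^2 * (c j / (INR j - INR k)^2) else Mr^2 * c j).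
  assert (Hterm : forall j, Rabs (c j * A j - e j) <= bb j).
  { intros j. unfold e, bb. destruct (Nat.eq_dec j k) as [E|E].
    - subst. rewrite HAk. rewrite Rminus_diag, Rabs_R0. lra.
    - rewrite Rminus_0_r, Rabs_mult, (Rabs_pos_eq (c j)) by auto.
      destruct (le_dec j J).
      + destruct (Rle_lt_or_eq_dec 0 (c j) (Hc j)) as [Hcj|Hcj].
        * eapply Rle_trans. apply Rmult_le_compat_l; [lra| apply HAoff; auto].
          assert (INR j <> INR k) by (intro E'; apply INR_eq in E'; auto).
          right. field. split; [|lra]. intro Z. apply H. nra.
        * rewrite <- Hcj. rewrite Rmult_0_l. unfold Rdiv. rewrite Rmult_0_l, Rmult_0_r. lra.
      + rewrite Rmult_comm. apply Rmult_le_compat_r; auto. }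
  assert (Hbb : forall d, sum_f_R0 bb (J + d) = Mr^2/C^2 * qsum c k J + Mr^2 * (sum_f_R0 c (J + d) - sum_f_R0 c J)).
  { induction d.
    - rewrite Nat.add_0_r, Rminus_diag, Rmult_0_r, Rplus_0_r. unfold qsum. rewrite scal_sum.
      apply sum_eq. intros i Hi. unfold bb.
      destruct (Nat.eq_dec i k). ring. destruct (le_dec i J); [ring| lia].
    - rewrite Nat.add_succ_r, !tech5, IHd. unfold bb.
      destruct (Nat.eq_dec (S (J + d)) k); [lia|]. destruct (le_dec (S (J + d)) J); [lia|]. ring. }
  assert (HK8 : K / (C * C) <= /8).
  { apply (Rmult_le_reg_r (8 * (C*C))). nra. replace (K / (C * C) * (8 * (C * C))) with (8*K) by (field; lra). nra. }
  assert (Hpart : forall N, (J <= N)%nat -> Rabs (sum_f_R0 (fun j => c j * A j) N - c k * (Mr^2/2)) <= Mr^2 * c k / 4).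
  { intros N HN.
    rewrite <- (sum_ind k (c k * (Mr^2/2)) N) by lia. fold e. rewrite <- minus_sum.
    eapply Rle_trans; [apply sum_f_R0_triangle|].
    eapply Rle_trans; [apply sum_Rle; intros; apply Hterm|].
    replace N with (J + (N - J))%nat by lia. rewrite Hbb.
    assert (Hq1 := Hq J). assert (Hj := HJ (J + (N - J))%nat ltac:(lia)).
    assert (Mr^2/C^2 * qsum c k J <= Mr^2 * (c k / 8)).
    { replace (Mr^2/C^2 * qsum c k J) with (Mr^2 * (qsum c k J / (C*C))) by (field; lra).
      apply Rmult_le_compat_l; [nra|]. apply (Rmult_le_reg_r (C*C)); [nra|].
      replace (qsum c k J / (C * C) * (C * C)) with (qsum c k J) by (field; lra).
      apply (Rmult_le_compat_r (C*C)) in HK8; [|nra].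
      replace (K / (C*C) * (C*C)) with K in HK8 by (field; lra). nra. }
    assert (Mr^2 * (sum_f_R0 c (J + (N - J)) - sum_f_R0 c J) <= Mr^2 * (c k / 8)) by (apply Rmult_le_compat_l; nra).
    lra. }
  assert (Hlim : Rabs (T F - c k * (Mr^2/2)) <= Mr^2 * c k / 4).
  { apply (lim_le _ _ _ _ HTcv). exists J. exact Hpart. }
  assert (HTF' : Mr^2 * c k / 4 <= Rabs (T F)).
  { assert (0 <= Mr^2 * c k) by (apply Rmult_le_pos; nra).
    assert (T F >= Mr^2 * c k / 4).
    { unfold Rabs in Hlim. destruct (Rcase_abs (T F - c k * (Mr ^ 2 / 2))); lra. }
    rewrite Rabs_pos_eq; lra. }
  assert (Hfin : Mr^2 * c k / 4 <= Mr^2 * (eps * (Mr * dl))) by lra.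
  assert (Hfin2 : c k / 4 <= eps * (Mr * dl)).
  { apply (Rmult_le_reg_l (Mr^2)); [nra|]. lra. }
  replace (Mr * dl) with (2 * PI * INR r / lam k) in Hfin2 by (unfold dl; field; lra).
  apply (Rmult_le_compat_r (lam k)) in Hfin2; [|lra].
  replace (eps * (2 * PI * INR r / lam k) * lam k) with (eps * (2 * PI * INR r)) in Hfin2 by (field; lra).
  replace (c k / 4 * lam k) with (INR k / 4) in Hfin2 by lra.
  unfold eps in Hfin2. apply (Rmult_le_compat_r (128 * C)) in Hfin2; [|lra].
  replace (/ (128 * C) * (2 * PI * INR r) * (128 * C)) with (2 * PI * INR r) in Hfin2 by (field; lra).
  assert (INR r <= 2 * C * INR k) by nra. nra.
Qed.

Lemma gterm_bound c lam b t j : 0 <= c j -> Rabs (gterm c lam b t j) <= c j.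
Proof.
  intros H. unfold gterm. rewrite Rabs_mult, Rabs_pos_eq by auto.
  assert (Rabs (cos (lam j * t - b)) <= 1) by (apply Rabs_le; apply COS_bound).
  assert (0 <= Rabs (cos (lam j * t - b))) by apply Rabs_pos. nra.
Qed.

Lemma Un_cv_scal u l x : Un_cv u l -> Un_cv (fun n => x * u n) (x * l).
Proof. intros H. apply (CV_mult (fun _ => x) u). intros e He; exists O; intros; unfold Rdist; rewrite Rminus_diag, Rabs_R0; lra. exact H. Qed.

Lemma gen_exist c lam b : (forall j, 0 <= c j) -> (exists l, Un_cv (sum_f_R0 c) l) ->
  forall t, exists l, Un_cv (sum_f_R0 (gterm c lam b t)) l.
Proof.
  intros Hc [lc Hl] t.
  assert (H2 : {l | Un_cv (fun N => sum_f_R0 (fun j => 2 * c j) N) l}).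
  { exists (2 * lc). apply (Un_cv_ext (fun N => 2 * sum_f_R0 c N)). intros N. rewrite scal_sum. apply sum_eq. intros. ring.
    apply Un_cv_scal. exact Hl. }
  destruct (Rseries_CV_comp (fun j => gterm c lam b t j + c j) (fun j => 2 * c j)) as [lu Hlu].
  { intros j. assert (H := gterm_bound c lam b t j (Hc j)). apply Rabs_def2b in H || idtac.
    unfold Rabs in H. destruct (Rcase_abs (gterm c lam b t j)); split; lra. }
  exact H2.
  exists (lu - lc). apply (Un_cv_ext (fun N => sum_f_R0 (fun j => gterm c lam b t j + c j) N - sum_f_R0 c N)).
  intros N. rewrite <- minus_sum. apply sum_eq. intros. ring.
  apply CV_minus; auto.
Qed.

Lemma cont_partial c lam b N : continuity (fun t => sum_f_R0 (gterm c lam b t) N).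
Proof.
  induction N; simpl.
  - unfold gterm. reg.
  - apply continuity_plus; auto. unfold gterm. reg.
Qed.

Lemma gen_cont c lam b F : (forall j, 0 <= c j) -> (exists l, Un_cv (sum_f_R0 c) l) ->
  (forall t, Un_cv (sum_f_R0 (gterm c lam b t)) (F t)) -> continuity F.
Proof.
  intros Hc [lc Hl] HF t.
  set (r := mkposreal 1 Rlt_0_1).
  apply (CVU_continuity (fun N t => sum_f_R0 (gterm c lam b t) N) F t r).
  - intros e He. destruct (Hl e He) as [N0 HN0]. exists N0. intros n y Hn _.
    assert (H := sum_maj1 (fun j t => gterm c lam b t j) c y (F y) lc n (HF y) Hl (fun j => gterm_bound c lam b y j (Hc j))).
    unfold SP in H. specialize (HN0 n Hn). unfold Rdist in HN0.
    apply Rabs_def2 in HN0. eapply Rle_lt_trans; [apply H|]. lra.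
  - intros n y _. apply cont_partial.
  - unfold Boule. rewrite Rminus_diag, Rabs_R0. simpl. lra.
Qed.

Lemma Ek_ge1 i : 1 <= Ek i.
Proof. induction i; simpl; [lra|]. assert (H := exp_ineq1_le (Ek i)). lra. Qed.

Lemma Ek_lt i : Ek i < Ek (S i).
Proof. simpl. assert (H := exp_ineq1_le (Ek i)). lra. Qed.

Lemma Ek_mono i j : (i <= j)%nat -> Ek i <= Ek j.
Proof. induction 1; [lra|]. assert (H0 := Ek_lt m). lra. Qed.

Lemma ln_le' a b : 0 < a -> a <= b -> ln a <= ln b.
Proof. intros Ha Hab. destruct (Req_dec a b). subst; lra. left; apply ln_increasing; lra. Qed.

Lemma ln_le_m1 u : 0 < u -> ln u <= u - 1.
Proof. intros Hu. assert (H := exp_ineq1_le (ln u)). rewrite exp_ln in H by auto. lra. Qed.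

Lemma L_gt i m x : Ek (i + m) < x -> Ek m < Logk i x.
Proof.
  revert m. induction i; intros m H; simpl in *; auto.
  assert (H1 : Ek (i + S m) < x) by (rewrite Nat.add_succ_r; auto).
  specialize (IHi (S m) H1). simpl in IHi.
  rewrite <- (ln_exp (Ek m)). apply ln_increasing; auto. apply exp_pos.
Qed.

Lemma L_ge i m x : Ek (i + m) <= x -> Ek m <= Logk i x.
Proof.
  revert m. induction i; intros m H; simpl in *; auto.
  assert (H1 : Ek (i + S m) <= x) by (rewrite Nat.add_succ_r; auto).
  specialize (IHi (S m) H1). simpl in IHi.
  rewrite <- (ln_exp (Ek m)). apply ln_le'; auto. apply exp_pos.
Qed.

Lemma L_mono i x y : Ek i < x -> x <= y -> Logk i x <= Logk i y /\ Logk (S i) x <= Logk (S i) y.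
Proof.
  induction i; intros Hx Hxy.
  - simpl in *. split; auto. apply ln_le'; lra.
  - assert (H1 := Ek_lt i). destruct (IHi ltac:(lra) Hxy) as [_ H2]. split; auto.
    change (Logk (S (S i)) x) with (ln (Logk (S i) x)). change (Logk (S (S i)) y) with (ln (Logk (S i) y)).
    apply ln_le'; auto. assert (H3 := L_gt (S i) 0 x ltac:(rewrite Nat.add_0_r; auto)). simpl Ek in H3. lra.
Qed.

Lemma L_gt1 N1 i x : (i <= N1)%nat -> Ek N1 < x -> 1 < Logk i x.
Proof.
  intros Hi Hx. assert (H := L_gt i (N1 - i) x ltac:(replace (i + (N1 - i))%nat with N1 by lia; auto)).
  assert (H2 := Ek_ge1 (N1 - i)). lra.
Qed.

Lemma L_ge1 N1 i x : (i <= N1)%nat -> Ek N1 <= x -> 1 <= Logk i x.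
Proof.
  intros Hi Hx. assert (H := L_ge i (N1 - i) x ltac:(replace (i + (N1 - i))%nat with N1 by lia; auto)).
  assert (H2 := Ek_ge1 (N1 - i)). lra.
Qed.

Lemma Ln_pos N1 x : Ek N1 < x -> 0 < Logk (S N1) x.
Proof.
  intros Hx. change (Logk (S N1) x) with (ln (Logk N1 x)). rewrite <- ln_1.
  apply ln_increasing. lra. apply (L_gt1 N1 N1); auto.
Qed.

Lemma prod_ge1 N1 p x : (p <= N1)%nat -> Ek N1 < x -> 1 <= prodLog p x.
Proof.
  induction p; intros Hp Hx; [simpl; lra|].
  change (prodLog (S p) x) with (prodLog p x * Logk (S p) x).
  assert (H1 := IHp ltac:(lia) Hx). assert (H2 := L_gt1 N1 (S p) x Hp Hx). nra.
Qed.

Lemma prod_mono N1 p x y : (p <= N1)%nat -> Ek N1 < x -> x <= y -> prodLog p x <= prodLog p y.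
Proof.
  induction p; intros Hp Hx Hxy; [simpl; lra|].
  change (prodLog (S p) x) with (prodLog p x * Logk (S p) x).
  change (prodLog (S p) y) with (prodLog p y * Logk (S p) y).
  assert (H1 := IHp ltac:(lia) Hx Hxy). assert (H2 := L_gt1 N1 (S p) x Hp Hx).
  assert (H3 : Ek p < x) by (assert (H4 := Ek_mono p N1 ltac:(lia)); lra).
  destruct (L_mono p x y H3 Hxy) as [_ H5]. assert (H6 := prod_ge1 N1 p x ltac:(lia) Hx).
  apply Rmult_le_compat; lra.
Qed.

Definition wt N1 a x := x * prodLog N1 x * Rpower (Logk (S N1) x) a.

Lemma weight_eq N1 a x : weight (S N1) a x = wt N1 a x.
Proof. unfold weight, wt. replace (S N1 - 1)%nat with N1 by lia. reflexivity. Qed.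

Lemma phase_eq N1 a x : phase (S N1) a x = x * wt N1 a x.
Proof. unfold phase, wt. replace (S N1 - 1)%nat with N1 by lia. ring. Qed.

Lemma Rpower_pos x y : 0 < Rpower x y.
Proof. unfold Rpower. apply exp_pos. Qed.

Lemma wt_pos N1 a x : Ek N1 < x -> 0 < wt N1 a x.
Proof.
  intros Hx. unfold wt. assert (H1 := Ek_ge1 N1). assert (H2 := prod_ge1 N1 N1 x (le_n _) Hx).
  assert (H3 := Rpower_pos (Logk (S N1) x) a).
  apply Rmult_lt_0_compat; [|auto]. nra.
Qed.

Lemma wt_mono N1 a x y : 0 < a -> Ek N1 < x -> x <= y -> wt N1 a x <= wt N1 a y.
Proof.
  intros Ha Hx Hxy. unfold wt. assert (H1 := Ek_ge1 N1).
  assert (H2 := prod_ge1 N1 N1 x (le_n _) Hx). assert (H3 := prod_mono N1 N1 x y (le_n _) Hx Hxy).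
  destruct (L_mono N1 x y Hx Hxy) as [_ H4]. assert (H5 := Ln_pos N1 x Hx).
  assert (H6 : Rpower (Logk (S N1) x) a <= Rpower (Logk (S N1) y) a) by (apply Rle_Rpower_l; lra).
  assert (H7 := Rpower_pos (Logk (S N1) x) a).
  apply Rmult_le_compat; try lra. apply Rmult_le_pos; lra. apply Rmult_le_compat; lra.
Qed.

Lemma Rpower_ge1 u a : 1 <= u -> 0 <= a -> 1 <= Rpower u a.
Proof.
  intros Hu Ha. unfold Rpower. assert (0 <= ln u) by (rewrite <- ln_1; apply ln_le'; lra).
  assert (H0 := exp_ineq1_le (a * ln u)). nra.
Qed.

Lemma wt_ge N1 a x : 0 < a -> Ek (S N1) <= x -> x <= wt N1 a x.
Proof.
  intros Ha Hx. assert (Hx' : Ek N1 < x) by (assert (H := Ek_lt N1); lra).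
  unfold wt. assert (H1 := prod_ge1 N1 N1 x (le_n _) Hx').
  assert (H2 := L_ge1 (S N1) (S N1) x (le_n _) Hx). assert (H3 := Rpower_ge1 _ a H2 ltac:(lra)).
  assert (H4 := Ek_ge1 (S N1)). assert (x * 1 <= x * prodLog N1 x) by (apply Rmult_le_compat_l; lra).
  assert (x * prodLog N1 x * 1 <= x * prodLog N1 x * Rpower (Logk (S N1) x) a) by (apply Rmult_le_compat_l; lra).
  lra.
Qed.

Lemma ln2_lt1 : ln 2 < 1.
Proof. rewrite <- (ln_exp 1). apply ln_increasing; [lra|]. assert (H := exp_ineq1 1 ltac:(lra)). lra. Qed.

Lemma ln_mult2 u : 0 < u -> ln (2 * u) = ln 2 + ln u.
Proof. intros; apply ln_mult; lra. Qed.

Lemma L_double N1 x y : Ek (S N1) <= x -> x <= y -> y <= 2 * x ->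
  forall i, (i <= N1)%nat -> Logk (S i) y <= 2 * Logk (S i) x.
Proof.
  intros Hx Hxy Hy2. assert (HE := Ek_ge1 (S N1)). assert (Hl2 := ln2_lt1).
  induction i; intros Hi.
  - simpl. assert (H1 := L_ge1 (S N1) 1 x ltac:(lia) Hx). simpl in H1.
    assert (ln y <= ln (2 * x)) by (apply ln_le'; lra). rewrite ln_mult2 in H by lra. lra.
  - change (Logk (S (S i)) y) with (ln (Logk (S i) y)). change (Logk (S (S i)) x) with (ln (Logk (S i) x)).
    assert (H1 := IHi ltac:(lia)).
    assert (H2 := L_ge1 (S N1) (S i) x ltac:(lia) Hx).
    assert (H3 := L_ge1 (S N1) (S (S i)) x ltac:(lia) Hx). change (Logk (S (S i)) x) with (ln (Logk (S i) x)) in H3.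
    assert (H4 := L_ge1 (S N1) (S i) y ltac:(lia) ltac:(lra)).
    assert (ln (Logk (S i) y) <= ln (2 * Logk (S i) x)) by (apply ln_le'; lra).
    rewrite ln_mult2 in H by lra. lra.
Qed.

Lemma prod_double N1 x y : Ek (S N1) <= x -> x <= y -> y <= 2 * x ->
  forall p, (p <= N1)%nat -> prodLog p y <= 2 ^ p * prodLog p x.
Proof.
  intros Hx Hxy Hy2. assert (Hx' : Ek N1 < x) by (assert (H := Ek_lt N1); lra).
  induction p; intros Hp; [simpl; lra|].
  change (prodLog (S p) x) with (prodLog p x * Logk (S p) x).
  change (prodLog (S p) y) with (prodLog p y * Logk (S p) y).
  assert (H1 := IHp ltac:(lia)). assert (H2 := L_double N1 x y Hx Hxy Hy2 p ltac:(lia)).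
  assert (H3 := prod_ge1 N1 p y ltac:(lia) ltac:(lra)). assert (H4 := L_gt1 N1 (S p) y Hp ltac:(lra)).
  simpl pow.
  replace (2 * 2 ^ p * (prodLog p x * Logk (S p) x)) with ((2 ^ p * prodLog p x) * (2 * Logk (S p) x)) by ring.
  apply Rmult_le_compat; lra.
Qed.

Definition Dc N1 a := 2 * 2 ^ N1 * Rpower 2 a.

Lemma wt_double N1 a x y : 0 < a -> Ek (S N1) <= x -> x <= y -> y <= 2 * x -> wt N1 a y <= Dc N1 a * wt N1 a x.
Proof.
  intros Ha Hx Hxy Hy2. assert (Hx' : Ek N1 < x) by (assert (H := Ek_lt N1); lra).
  assert (HE := Ek_ge1 N1).
  unfold wt, Dc.
  assert (H1 := prod_double N1 x y Hx Hxy Hy2 N1 (le_n _)).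
  assert (H2 := L_double N1 x y Hx Hxy Hy2 N1 (le_n _)).
  assert (H3 := Ln_pos N1 y ltac:(lra)). assert (H3' := Ln_pos N1 x ltac:(lra)).
  assert (H4 : Rpower (Logk (S N1) y) a <= Rpower 2 a * Rpower (Logk (S N1) x) a).
  { rewrite Rpower_mult_distr by lra. apply Rle_Rpower_l; lra. }
  assert (H5 := prod_ge1 N1 N1 y (le_n _) ltac:(lra)).
  assert (H6 := Rpower_pos (Logk (S N1) y) a).
  replace (2 * 2 ^ N1 * Rpower 2 a * (x * prodLog N1 x * Rpower (Logk (S N1) x) a))
    with ((2 * x) * (2 ^ N1 * prodLog N1 x) * (Rpower 2 a * Rpower (Logk (S N1) x) a)) by ring.
  apply Rmult_le_compat; try lra.
  - apply Rmult_le_pos; lra.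
  - apply Rmult_le_compat; lra.
Qed.

Lemma L_le_ln N1 x : Ek N1 < x -> forall i, (i <= N1)%nat -> Logk (S i) x <= ln x.
Proof.
  intros Hx. induction i; intros Hi; [simpl; lra|].
  change (Logk (S (S i)) x) with (ln (Logk (S i) x)).
  assert (H1 := IHi ltac:(lia)). assert (H2 := L_gt1 N1 (S i) x Hi Hx).
  assert (H3 := ln_le_m1 (Logk (S i) x) ltac:(lra)). lra.
Qed.

Lemma prod_le_lnpow N1 x : Ek N1 < x -> forall p, (p <= N1)%nat -> prodLog p x <= ln x ^ p.
Proof.
  intros Hx. induction p; intros Hp; [simpl; lra|].
  change (prodLog (S p) x) with (prodLog p x * Logk (S p) x). simpl pow.
  assert (H1 := IHp ltac:(lia)). assert (H2 := L_le_ln N1 x Hx p ltac:(lia)).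
  assert (H3 := prod_ge1 N1 p x ltac:(lia) Hx). assert (H4 := L_gt1 N1 (S p) x Hp Hx).
  rewrite Rmult_comm. apply Rmult_le_compat; lra.
Qed.

Definition Bq N1 a := Rpower (INR N1 + a) (INR N1 + a).

Lemma wt_quad N1 a x : 0 < a -> Ek N1 < x -> wt N1 a x <= Bq N1 a * x ^ 2.
Proof.
  intros Ha Hx. assert (HE := Ek_ge1 N1). assert (HN := pos_INR N1).
  set (b := INR N1 + a). assert (Hb : 0 < b) by (unfold b; lra).
  assert (Hlnx : 0 < ln x).
  { assert (H := L_gt1 N1 1 x ltac:(lia) Hx) || idtac.
    destruct N1. simpl in Hx. rewrite <- ln_1. apply ln_increasing; lra.
    assert (H := L_gt1 (S N1) 1 x ltac:(lia) Hx). simpl in H. lra. }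
  assert (H1 := prod_le_lnpow N1 x Hx N1 (le_n _)).
  assert (H2 := L_le_ln N1 x Hx N1 (le_n _)).
  assert (H3 := Ln_pos N1 x Hx).
  assert (H4 : Rpower (Logk (S N1) x) a <= Rpower (ln x) a) by (apply Rle_Rpower_l; lra).
  assert (H5 : prodLog N1 x * Rpower (Logk (S N1) x) a <= Rpower (ln x) b).
  { unfold b. rewrite Rpower_plus, Rpower_pow by lra.
    assert (H6 := prod_ge1 N1 N1 x (le_n _) Hx). assert (H7 := Rpower_pos (Logk (S N1) x) a).
    apply Rmult_le_compat; lra. }
  assert (H6 : ln x <= b * Rpower x (/ b)).
  { assert (E : ln (Rpower x (/b)) = /b * ln x) by apply ln_Rpower.
    assert (H7 := ln_le_m1 (Rpower x (/b)) (Rpower_pos _ _)).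
    assert (ln x = b * (/b * ln x)) by (field; lra). rewrite H. rewrite <- E.
    apply Rmult_le_compat_l; lra. }
  assert (H7 : Rpower (ln x) b <= Bq N1 a * x).
  { eapply Rle_trans. apply Rle_Rpower_l; [lra| split; [exact Hlnx| exact H6]].
    rewrite <- Rpower_mult_distr by (try apply Rpower_pos; lra). rewrite Rpower_mult.
    replace (/ b * b) with 1 by (field; lra). rewrite Rpower_1 by lra. unfold Bq. fold b. lra. }
  unfold wt. replace (x * prodLog N1 x * Rpower (Logk (S N1) x) a) with (x * (prodLog N1 x * Rpower (Logk (S N1) x) a)) by ring.
  assert (0 < x) by lra. replace (Bq N1 a * x ^ 2) with (x * (Bq N1 a * x)) by ring.
  apply Rmult_le_compat_l; lra.
Qed.

Lemma ln_diff u v : 0 < u -> u <= v -> (v - u) / v <= ln v - ln u.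
Proof.
  intros Hu Huv. assert (H := ln_le_m1 (u / v) ltac:(apply Rdiv_lt_0_compat; lra)).
  unfold Rdiv in H. rewrite ln_mult, ln_Rinv in H by (try apply Rinv_0_lt_compat; lra).
  replace ((v - u) / v) with (1 - u * / v) by (field; lra). lra.
Qed.

Lemma L_diff p x y : Ek p < x -> x <= y -> (y - x) / (y * prodLog p y) <= Logk (S p) y - Logk (S p) x.
Proof.
  revert x y. induction p; intros x y Hx Hxy.
  - simpl in *. replace (y * 1) with y by ring. apply ln_diff; lra.
  - assert (H1 := Ek_lt p). specialize (IHp x y ltac:(lra) Hxy).
    assert (Hp1 := L_gt (S p) 0 x ltac:(rewrite Nat.add_0_r; auto)). simpl Ek in Hp1.
    destruct (L_mono (S p) x y Hx Hxy) as [Hm _].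
    assert (Hd := ln_diff (Logk (S p) x) (Logk (S p) y) ltac:(lra) Hm).
    change (Logk (S (S p)) y) with (ln (Logk (S p) y)). change (Logk (S (S p)) x) with (ln (Logk (S p) x)).
    change (prodLog (S p) y) with (prodLog p y * Logk (S p) y).
    assert (Hpy : 1 <= prodLog p y) by (apply (prod_ge1 p p y (le_n _)); lra).
    assert (Hy : 0 < y) by (assert (H := Ek_ge1 (S p)); lra).
    eapply Rle_trans; [|exact Hd].
    replace ((y - x) / (y * (prodLog p y * Logk (S p) y))) with ((y - x) / (y * prodLog p y) / Logk (S p) y) by (field; repeat split; lra).
    unfold Rdiv. apply Rmult_le_compat_r. left; apply Rinv_0_lt_compat; lra. exact IHp.
Qed.

Lemma convex_ineq a u v : 1 < a -> 0 < u -> u <= v ->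
  (a - 1) * (v - u) / Rpower v a <= Rpower u (1 - a) - Rpower v (1 - a).
Proof.
  intros Ha Hu Huv. set (s := u / v). assert (Hs : 0 < s) by (unfold s; apply Rdiv_lt_0_compat; lra).
  assert (Hu' : u = v * s) by (unfold s; field; lra).
  assert (E1 : Rpower u (1 - a) = Rpower v (1 - a) * Rpower s (1 - a)) by (rewrite Hu', Rpower_mult_distr; lra).
  assert (E2 : Rpower v (1 - a) = v / Rpower v a).
  { unfold Rminus. rewrite Rpower_plus, Rpower_1, Rpower_Ropp by lra. reflexivity. }
  assert (Hb : 1 + (1 - a) * (s - 1) <= Rpower s (1 - a)).
  { unfold Rpower. assert (H := exp_ineq1_le ((1 - a) * ln s)). assert (H2 := ln_le_m1 s Hs). nra. }
  rewrite E1, E2. assert (Hva := Rpower_pos v a).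
  replace ((a - 1) * (v - u) / Rpower v a) with (v / Rpower v a * ((1 - a) * (s - 1))) by (rewrite Hu'; field; lra).
  assert (0 < v / Rpower v a) by (apply Rdiv_lt_0_compat; lra).
  replace (v / Rpower v a * Rpower s (1 - a) - v / Rpower v a) with (v / Rpower v a * (Rpower s (1 - a) - 1)) by ring.
  apply Rmult_le_compat_l; lra.
Qed.

Definition fT N1 a x := Rpower (Logk (S N1) x) (1 - a).

Lemma tele_step N1 a x : 1 < a -> Ek N1 < x -> (a - 1) / wt N1 a (x + 1) <= fT N1 a x - fT N1 a (x + 1).
Proof.
  intros Ha Hx. unfold fT.
  assert (Hd := L_diff N1 x (x + 1) Hx ltac:(lra)).
  replace (x + 1 - x) with 1 in Hd by ring.
  assert (Hu := Ln_pos N1 x Hx). destruct (L_mono N1 x (x+1) Hx ltac:(lra)) as [_ Hm].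
  assert (Hc := convex_ineq a _ _ Ha Hu Hm).
  eapply Rle_trans; [|exact Hc].
  set (v := Logk (S N1) (x + 1)) in *. set (u := Logk (S N1) x) in *.
  assert (Hva := Rpower_pos v a). assert (HE := Ek_ge1 N1).
  assert (Hp := prod_ge1 N1 N1 (x+1) (le_n _) ltac:(lra)).
  unfold wt. fold v.
  replace ((a - 1) / ((x + 1) * prodLog N1 (x + 1) * Rpower v a)) with ((a - 1) * (1 / ((x + 1) * prodLog N1 (x + 1))) / Rpower v a)
    by (field; repeat split; lra).
  unfold Rdiv at 1 3. apply Rmult_le_compat_r. left; apply Rinv_0_lt_compat; lra.
  apply Rmult_le_compat_l; lra.
Qed.

Definition gk (k j : nat) := if Nat.eq_dec j k then 0 else / (INR j - INR k)^2.

Lemma inv_ineq m : 1 <= m -> / m^2 <= /(m - /2) - /(m + /2).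
Proof.
  intros Hm. replace (/(m - /2) - /(m + /2)) with (/(m^2 - /4)) by (field; repeat split; nra).
  apply Rinv_le_contravar; nra.
Qed.

Lemma sum_g_inv k N : (1 <= k)%nat ->
  ((N < k)%nat -> sum_f_R0 (gk k) N <= /(INR k - INR N - /2) - /(INR k + /2)) /\
  ((k <= N)%nat -> sum_f_R0 (gk k) N <= 4 - /(INR N - INR k + /2)).
Proof.
  intros Hk. assert (Hkr : 1 <= INR k) by (apply (le_INR 1); auto).
  induction N.
  - split; [|lia]. intros _. simpl sum_f_R0. unfold gk. destruct (Nat.eq_dec 0 k); [lia|]. change (INR 0) with 0.
    replace ((0 - INR k)^2) with (INR k ^2) by ring. replace (INR k - 0 - /2) with (INR k - /2) by ring.
    apply inv_ineq; auto.
  - destruct IHN as [I1 I2]. rewrite tech5.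
    assert (HN := pos_INR N).
    destruct (lt_eq_lt_dec (S N) k) as [[Hlt|Heq]|Hgt].
    + split; [|lia]. intros _.
      assert (Eg : gk k (S N) = / (INR N + 1 - INR k)^2) by (unfold gk; destruct Nat.eq_dec; [lia|]; rewrite S_INR; auto).
      rewrite Eg, S_INR.
      assert (H2 : INR (S (S N)) <= INR k) by (apply le_INR; lia). rewrite !S_INR in H2.
      specialize (I1 ltac:(lia)). set (m := INR k - INR N - 1).
      assert (Hm := inv_ineq m ltac:(unfold m; lra)).
      replace ((INR N + 1 - INR k)^2) with (m^2) by (unfold m; ring).
      replace (INR k - INR N - /2) with (m + /2) in I1 by (unfold m; field).
      replace (INR k - (INR N + 1) - /2) with (m - /2) by (unfold m; field). lra.
    + split; [lia|]. intros _.
      subst k. specialize (I1 ltac:(lia)). rewrite S_INR in I1. rewrite ?S_INR.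
      replace (INR N + 1 - INR N - /2) with (/2) in I1 by field.
      replace (INR N + 1 - (INR N + 1) + /2) with (/2) by field. rewrite Rinv_inv in *.
      assert (0 < /(INR N + 1 + /2)) by (apply Rinv_0_lt_compat; lra). assert (gk (S N) (S N) = 0) by (unfold gk; destruct Nat.eq_dec; [auto|lia]). lra.
    + split; [lia|]. intros _.
      assert (Eg : gk k (S N) = / (INR N + 1 - INR k)^2) by (unfold gk; destruct Nat.eq_dec; [lia|]; rewrite S_INR; auto).
      rewrite Eg. rewrite S_INR.
      specialize (I2 ltac:(lia)). assert (H2 : INR k <= INR N) by (apply le_INR; lia).
      set (m := INR N + 1 - INR k).
      assert (Hm := inv_ineq m ltac:(unfold m; lra)).
      replace ((INR N + 1 - INR k)^2) with (m^2) by (unfold m; ring).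
      replace (INR N - INR k + /2) with (m - /2) in I2 by (unfold m; field).
      replace (INR N + 1 - INR k + /2) with (m + /2) by (unfold m; field). lra.
Qed.

Lemma sum_g k N : (1 <= k)%nat -> sum_f_R0 (gk k) N <= 4.
Proof.
  intros Hk. destruct (sum_g_inv k N Hk) as [I1 I2]. destruct (le_lt_dec k N).
  - specialize (I2 l). assert (H : INR k <= INR N) by (apply le_INR; auto).
    assert (0 < /(INR N - INR k + /2)) by (apply Rinv_0_lt_compat; lra). lra.
  - specialize (I1 l). assert (H : INR (S N) <= INR k) by (apply le_INR; lia). rewrite S_INR in H.
    assert (Hkr : 1 <= INR k) by (apply (le_INR 1); auto).
    assert (0 < /(INR k + /2)) by (apply Rinv_0_lt_compat; lra).
    assert (/(INR k - INR N - /2) <= 2).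
    { replace 2 with (/ /2) by field. apply Rinv_le_contravar; lra. }
    lra.
Qed.

Definition cc N1 a j := if Rlt_dec (Ek N1) (INR j) then / wt N1 a (INR j) else 0.
Definition lm N1 a j := INR j * wt N1 a (INR j).

Lemma cc_nonneg N1 a j : 0 < a -> 0 <= cc N1 a j.
Proof. intros Ha. unfold cc. destruct Rlt_dec; [|lra]. left; apply Rinv_0_lt_compat, wt_pos; auto. Qed.

Lemma cc_active N1 a j : 0 < cc N1 a j -> Ek N1 < INR j.
Proof. unfold cc. destruct Rlt_dec; auto; lra. Qed.

Lemma cc_eq N1 a j : Ek N1 < INR j -> cc N1 a j = / wt N1 a (INR j).
Proof. intros H. unfold cc. destruct Rlt_dec; [auto| lra]. Qed.

Lemma growing_le (u : nat -> R) : Un_growing u -> forall n m, (n <= m)%nat -> u n <= u m.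
Proof. intros Hg n m H. induction H; [lra|]. assert (H1 := Hg m). lra. Qed.

Lemma cc_summable N1 a : 1 < a -> exists l, Un_cv (sum_f_R0 (cc N1 a)) l.
Proof.
  intros Ha. assert (HE := Ek_ge1 N1).
  destruct (nat_between (Ek N1 + 1)) as [j0 [Hj0 _]]; [lra|].
  assert (Hg : Un_growing (sum_f_R0 (cc N1 a))).
  { intros n. rewrite tech5. assert (H := cc_nonneg N1 a (S n) ltac:(lra)). lra. }
  assert (Hstep : forall d, sum_f_R0 (cc N1 a) (j0 + d) + fT N1 a (INR (j0 + d)) / (a - 1) <=
                           sum_f_R0 (cc N1 a) j0 + fT N1 a (INR j0) / (a - 1)).
  { induction d. rewrite Nat.add_0_r. lra.
    rewrite Nat.add_succ_r, tech5.
    assert (Hx : Ek N1 < INR (j0 + d)) by (assert (INR j0 <= INR (j0 + d)) by (apply le_INR; lia); lra).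
    rewrite cc_eq by (rewrite S_INR; lra). rewrite S_INR.
    assert (Ht := tele_step N1 a (INR (j0 + d)) Ha Hx).
    assert (Hw := wt_pos N1 a (INR (j0 + d) + 1) ltac:(lra)).
    assert (/ wt N1 a (INR (j0 + d) + 1) <= (fT N1 a (INR (j0 + d)) - fT N1 a (INR (j0 + d) + 1)) / (a - 1)).
    { apply (Rmult_le_reg_l (a - 1)); [lra|].
      replace ((a - 1) * ((fT N1 a (INR (j0 + d)) - fT N1 a (INR (j0 + d) + 1)) / (a - 1)))
        with (fT N1 a (INR (j0 + d)) - fT N1 a (INR (j0 + d) + 1)) by (field; repeat split; lra). exact Ht. }
    replace (fT N1 a (INR (j0 + d)) / (a - 1)) with ((fT N1 a (INR (j0 + d)) - fT N1 a (INR (j0 + d) + 1)) / (a - 1) + fT N1 a (INR (j0 + d) + 1) / (a - 1)) in IHd by (field; repeat split; lra).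
    lra. }
  assert (Hub : forall N, sum_f_R0 (cc N1 a) N <= sum_f_R0 (cc N1 a) j0 + fT N1 a (INR j0) / (a - 1)).
  { intros N. assert (Hf0 : 0 <= fT N1 a (INR j0) / (a - 1)) by (apply Rmult_le_pos; [left; apply Rpower_pos| left; apply Rinv_0_lt_compat; lra]).
    destruct (le_lt_dec N j0).
    - assert (H := growing_le _ Hg N j0 l). lra.
    - specialize (Hstep (N - j0)%nat). replace (j0 + (N - j0))%nat with N in Hstep by lia.
      assert (0 <= fT N1 a (INR N) / (a - 1)) by (apply Rmult_le_pos; [left; apply Rpower_pos| left; apply Rinv_0_lt_compat; lra]).
      lra. }
  destruct (growing_cv _ Hg) as [l Hl].
  { exists (sum_f_R0 (cc N1 a) j0 + fT N1 a (INR j0) / (a - 1)). intros x [N HN]. subst. apply Hub. }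
  exists l; auto.
Qed.

Definition Kc N1 a lc := 4 * Dc N1 a + 4 * lc * Bq N1 a + 1.

Lemma Dc_ge1 N1 a : 0 < a -> 1 <= Dc N1 a.
Proof.
  intros Ha. unfold Dc. assert (1 <= 2 ^ N1) by (apply pow_R1_Rle; lra).
  assert (1 <= Rpower 2 a) by (apply Rpower_ge1; lra). nra.
Qed.

Lemma Bq_pos N1 a : 0 < Bq N1 a.
Proof. apply Rpower_pos. Qed.

Lemma qsum_bound N1 a lc : 1 < a -> Un_cv (sum_f_R0 (cc N1 a)) lc ->
  forall k, 2 * Ek (S N1) + 2 <= INR k -> forall N, qsum (cc N1 a) k N <= Kc N1 a lc * cc N1 a k.
Proof.
  intros Ha Hl k Hk N.
  assert (HE := Ek_ge1 (S N1)). assert (HE2 := Ek_lt N1).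
  assert (Hg : Un_growing (sum_f_R0 (cc N1 a))).
  { intros n. rewrite tech5. assert (H := cc_nonneg N1 a (S n) ltac:(lra)). lra. }
  assert (Hlc0 : 0 <= lc). { assert (H := growing_ineq _ _ Hg Hl 0). simpl in H. assert (H0 := cc_nonneg N1 a 0 ltac:(lra)). lra. }
  assert (Hk1 : (1 <= k)%nat). { destruct k; [change (INR 0) with 0 in Hk; lra| lia]. }
  assert (Hka : Ek N1 < INR k) by lra.
  set (wk := wt N1 a (INR k)). assert (Hwk : 0 < wk) by (apply wt_pos; lra).
  assert (Hck : cc N1 a k = / wk) by (apply cc_eq; lra).
  assert (HD := Dc_ge1 N1 a ltac:(lra)).
  assert (Hterm : forall j, (if Nat.eq_dec j k then 0 else cc N1 a j / (INR j - INR k)^2) <=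
      Dc N1 a * cc N1 a k * gk k j + 4 / INR k ^ 2 * cc N1 a j).
  { intros j. unfold gk. assert (Hcj := cc_nonneg N1 a j ltac:(lra)).
    assert (Hk2 : 0 < INR k ^ 2) by (apply pow_lt; lra).
    assert (0 <= 4 / INR k ^2 * cc N1 a j) by (apply Rmult_le_pos; [apply Rmult_le_pos; [lra| left; apply Rinv_0_lt_compat; auto]| auto]).
    destruct (Nat.eq_dec j k); [lra|].
    assert (Hjk : INR j <> INR k) by (intro E; apply INR_eq in E; auto).
    assert (Hsq : 0 < (INR j - INR k)^2) by (assert (INR j - INR k <> 0) by lra; nra).
    destruct (Rle_lt_dec (INR k) (2 * INR j)).
    - assert (Hja : Ek (S N1) <= INR j) by lra.
      rewrite (cc_eq N1 a j) by lra.
      assert (Hwj := wt_pos N1 a (INR j) ltac:(lra)).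
      assert (Hcmp : / wt N1 a (INR j) <= Dc N1 a * / wk).
      { destruct (Rle_lt_dec (INR k) (INR j)).
        - assert (wk <= wt N1 a (INR j)) by (apply wt_mono; lra).
          assert (/ wt N1 a (INR j) <= / wk) by (apply Rinv_le_contravar; lra).
          assert (0 < / wk) by (apply Rinv_0_lt_compat; lra). nra.
        - assert (wk <= Dc N1 a * wt N1 a (INR j)) by (apply wt_double; lra).
          apply (Rmult_le_reg_l (wt N1 a (INR j) * wk)). nra.
          replace (wt N1 a (INR j) * wk * / wt N1 a (INR j)) with wk by (field; repeat split; lra).
          replace (wt N1 a (INR j) * wk * (Dc N1 a * / wk)) with (Dc N1 a * wt N1 a (INR j)) by (field; repeat split; lra). lra. }
      rewrite Hck. unfold Rdiv.
      assert (0 < / (INR j - INR k)^2) by (apply Rinv_0_lt_compat; auto).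
      assert (/ wt N1 a (INR j) * / (INR j - INR k) ^ 2 <= Dc N1 a * / wk * / (INR j - INR k) ^ 2) by (apply Rmult_le_compat_r; lra).
      assert (0 <= 4 * / INR k ^ 2 * / wt N1 a (INR j)) by (apply Rmult_le_pos; [apply Rmult_le_pos; [lra| left; apply Rinv_0_lt_compat; auto]| left; apply Rinv_0_lt_compat; auto]). lra.
    - assert (Hb : INR k ^ 2 / 4 <= (INR j - INR k)^2) by (assert (0 <= INR j) by apply pos_INR; nra).
      assert (cc N1 a j / (INR j - INR k)^2 <= 4 / INR k ^ 2 * cc N1 a j).
      { assert (Hi : / (INR j - INR k)^2 <= / (INR k ^ 2 / 4)) by (apply Rinv_le_contravar; lra).
        replace (/ (INR k ^ 2 / 4)) with (4 / INR k ^ 2) in Hi by (field; lra).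
        unfold Rdiv at 1. rewrite Rmult_comm. apply Rmult_le_compat_r; auto. }
      assert (0 <= Dc N1 a * cc N1 a k * / (INR j - INR k) ^ 2).
      { apply Rmult_le_pos; [apply Rmult_le_pos; [lra| apply cc_nonneg; lra]| left; apply Rinv_0_lt_compat; auto]. }
      lra. }
  unfold qsum. eapply Rle_trans; [apply sum_Rle; intros; apply Hterm|].
  rewrite plus_sum.
  replace (sum_f_R0 (fun i => Dc N1 a * cc N1 a k * gk k i) N) with (Dc N1 a * cc N1 a k * sum_f_R0 (gk k) N)
    by (rewrite scal_sum; apply sum_eq; intros; ring).
  replace (sum_f_R0 (fun i => 4 / INR k ^ 2 * cc N1 a i) N) with (4 / INR k ^ 2 * sum_f_R0 (cc N1 a) N)
    by (rewrite scal_sum; apply sum_eq; intros; ring).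
  assert (H1 := sum_g k N Hk1). assert (H2 := growing_ineq _ _ Hg Hl N).
  assert (Hck0 : 0 < cc N1 a k) by (rewrite Hck; apply Rinv_0_lt_compat; auto).
  assert (Hq : wk <= Bq N1 a * INR k ^ 2) by (apply wt_quad; lra).
  assert (Hk2 : 0 < INR k ^ 2) by (apply pow_lt; lra).
  assert (Hinv : / INR k ^ 2 <= Bq N1 a * cc N1 a k).
  { rewrite Hck. apply (Rmult_le_reg_l (INR k ^ 2 * wk)). nra.
    replace (INR k ^ 2 * wk * / INR k ^ 2) with wk by (field; repeat split; lra).
    replace (INR k ^ 2 * wk * (Bq N1 a * / wk)) with (Bq N1 a * INR k ^ 2) by (field; repeat split; lra). lra. }
  assert (HS0 : 0 <= sum_f_R0 (cc N1 a) N) by (apply cond_pos_sum; intros; apply cc_nonneg; lra).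
  assert (Dc N1 a * cc N1 a k * sum_f_R0 (gk k) N <= Dc N1 a * cc N1 a k * 4) by (apply Rmult_le_compat_l; nra).
  assert (4 / INR k ^ 2 * sum_f_R0 (cc N1 a) N <= 4 * (Bq N1 a * cc N1 a k) * lc).
  { unfold Rdiv. rewrite Rmult_assoc. replace (4 * (Bq N1 a * cc N1 a k) * lc) with (4 * ((Bq N1 a * cc N1 a k) * lc)) by ring.
    apply Rmult_le_compat_l; [lra|]. apply Rmult_le_compat; auto.
    left; apply Rinv_0_lt_compat; auto. }
  unfold Kc. assert (HB := Bq_pos N1 a). nra.
Qed.

Lemma hgood N1 a lc : 1 < a -> Un_cv (sum_f_R0 (cc N1 a)) lc ->
  forall B, exists k, (1 <= k)%nat /\ 0 < cc N1 a k /\ cc N1 a k * lm N1 a k = INR k /\ B * INR k <= lm N1 a k /\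
        (forall j, 0 < cc N1 a j -> j <> k -> (INR j - INR k)^2 * (lm N1 a k)^2 <= (lm N1 a j - lm N1 a k)^2 * (INR k)^2) /\
        (forall N, qsum (cc N1 a) k N <= Kc N1 a lc * cc N1 a k).
Proof.
  intros Ha Hl B. assert (HE := Ek_ge1 (S N1)). assert (HE2 := Ek_lt N1).
  destruct (nat_between (Rmax (2 * Ek (S N1) + 2) B)) as [k [Hk _]].
  { eapply Rle_trans; [|apply Rmax_l]. lra. }
  assert (Hk1 : 2 * Ek (S N1) + 2 <= INR k) by (eapply Rle_trans; [apply Rmax_l| exact Hk]).
  assert (HkB : B <= INR k) by (eapply Rle_trans; [apply Rmax_r| exact Hk]).
  exists k.
  assert (Hkn : (1 <= k)%nat) by (destruct k; [change (INR 0) with 0 in Hk1; lra| lia]).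
  assert (Hka : Ek N1 < INR k) by lra.
  set (wk := wt N1 a (INR k)). assert (Hwk : 0 < wk) by (apply wt_pos; lra).
  assert (Hck : cc N1 a k = / wk) by (apply cc_eq; lra).
  assert (Hge : INR k <= wk) by (apply wt_ge; lra).
  split; [auto|]. split; [rewrite Hck; apply Rinv_0_lt_compat; auto|].
  split. { rewrite Hck. unfold lm. fold wk. field. lra. }
  split. { unfold lm. fold wk. nra. }
  split.
  - intros j Hcj Hjk. assert (Hja := cc_active N1 a j Hcj).
    assert (Hj0 := pos_INR j).
    assert (Hjk' : INR j <> INR k) by (intro E; apply INR_eq in E; auto).
    unfold lm. fold wk. set (wj := wt N1 a (INR j)).
    assert (Hwj : 0 < wj) by (apply wt_pos; lra).
    assert (Key : (INR j - INR k)^2 * wk^2 <= (INR j * wj - INR k * wk)^2).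
    { destruct (Rlt_or_le (INR j) (INR k)).
      - assert (wj <= wk) by (apply wt_mono; lra).
        assert (0 <= (INR k - INR j) * wk <= INR k * wk - INR j * wj) by (split; nra).
        replace ((INR j - INR k)^2 * wk^2) with (((INR k - INR j) * wk)^2) by ring.
        replace ((INR j * wj - INR k * wk)^2) with ((INR k * wk - INR j * wj)^2) by ring.
        apply pow_incr; lra.
      - assert (wk <= wj) by (apply wt_mono; lra).
        assert (0 <= (INR j - INR k) * wk <= INR j * wj - INR k * wk) by (split; nra).
        replace ((INR j - INR k)^2 * wk^2) with (((INR j - INR k) * wk)^2) by ring.
        apply pow_incr; lra. }
    replace ((INR j - INR k) ^ 2 * (INR k * wk) ^ 2) with ((INR j - INR k)^2 * wk^2 * INR k ^2) by ring.
    apply Rmult_le_compat_r; [nra| exact Key].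
  - intros N. apply qsum_bound; auto.
Qed.

Lemma termRe_eq N1 a t j : termRe (S N1) a t j = gterm (cc N1 a) (lm N1 a) 0 t j.
Proof.
  unfold termRe, gterm, cc, lm. replace (S N1 - 1)%nat with N1 by lia.
  rewrite weight_eq, phase_eq. destruct Rlt_dec; [|ring].
  rewrite Rminus_0_r. unfold Rdiv. rewrite Rmult_comm. f_equal. f_equal. ring.
Qed.

Lemma termIm_eq N1 a t j : termIm (S N1) a t j = gterm (cc N1 a) (lm N1 a) (PI/2) t j.
Proof.
  unfold termIm, gterm, cc, lm. replace (S N1 - 1)%nat with N1 by lia.
  rewrite weight_eq, phase_eq. destruct Rlt_dec; [|ring].
  rewrite cos_shift_sin. unfold Rdiv. rewrite Rmult_comm. f_equal. f_equal. ring.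
Qed.

Theorem mainTheorem12 (n : nat) (a : R) (hn : (2 <= n)%nat) (ha : 1 < a) :
  (forall t : R, exists l : R, Un_cv (partRe n a t) l) /\
  (forall t : R, exists l : R, Un_cv (partIm n a t) l) /\
  (forall ReF ImF : R -> R,
     (forall t, Un_cv (partRe n a t) (ReF t)) ->
     (forall t, Un_cv (partIm n a t) (ImF t)) ->
     continuity ReF /\ continuity ImF /\
     forall t : R,
       ~ (exists l, derivable_pt_lim ReF t l) /\
       ~ (exists l, derivable_pt_lim ImF t l) /\
       ~ (exists l1 l2, derivable_pt_lim ReF t l1 /\ derivable_pt_lim ImF t l2)).
Proof.
  destruct n as [|N1]; [lia|].
  assert (HRe : forall t N, partRe (S N1) a t N = sum_f_R0 (gterm (cc N1 a) (lm N1 a) 0 t) N).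
  { intros t N. unfold partRe. apply sum_eq. intros; apply termRe_eq. }
  assert (HIm : forall t N, partIm (S N1) a t N = sum_f_R0 (gterm (cc N1 a) (lm N1 a) (PI/2) t) N).
  { intros t N. unfold partIm. apply sum_eq. intros; apply termIm_eq. }
  assert (Hc : forall j, 0 <= cc N1 a j) by (intros; apply cc_nonneg; lra).
  assert (Hlam : forall j, 0 < cc N1 a j -> 0 <= lm N1 a j).
  { intros j Hj. assert (H := cc_active N1 a j Hj). unfold lm.
    assert (0 < wt N1 a (INR j)) by (apply wt_pos; auto). assert (0 <= INR j) by apply pos_INR. nra. }
  destruct (cc_summable N1 a ha) as [lc Hlc].
  assert (Hsum : exists l, Un_cv (sum_f_R0 (cc N1 a)) l) by (exists lc; auto).
  assert (Hlc0 : 0 <= lc).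
  { assert (Hg : Un_growing (sum_f_R0 (cc N1 a))) by (intros m; rewrite tech5; assert (H := Hc (S m)); lra).
    assert (H := growing_ineq _ _ Hg Hlc 0). simpl in H. assert (H0 := Hc 0%nat). lra. }
  assert (HK : 0 < Kc N1 a lc).
  { unfold Kc. assert (H1 := Dc_ge1 N1 a ltac:(lra)). assert (H2 := Bq_pos N1 a). nra. }
  assert (Hgood := hgood N1 a lc ha Hlc).
  split; [|split].
  - intros t. destruct (gen_exist (cc N1 a) (lm N1 a) 0 Hc Hsum t) as [l Hl]. exists l.
    apply (Un_cv_ext (sum_f_R0 (gterm (cc N1 a) (lm N1 a) 0 t))); [intros; rewrite HRe; auto| auto].
  - intros t. destruct (gen_exist (cc N1 a) (lm N1 a) (PI/2) Hc Hsum t) as [l Hl]. exists l.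
    apply (Un_cv_ext (sum_f_R0 (gterm (cc N1 a) (lm N1 a) (PI/2) t))); [intros; rewrite HIm; auto| auto].
  - intros ReF ImF HR HI.
    assert (HR' : forall t, Un_cv (sum_f_R0 (gterm (cc N1 a) (lm N1 a) 0 t)) (ReF t)).
    { intros t. apply (Un_cv_ext (partRe (S N1) a t)); auto. }
    assert (HI' : forall t, Un_cv (sum_f_R0 (gterm (cc N1 a) (lm N1 a) (PI/2) t)) (ImF t)).
    { intros t. apply (Un_cv_ext (partIm (S N1) a t)); auto. }
    split; [apply (gen_cont _ _ _ _ Hc Hsum HR')|]. split; [apply (gen_cont _ _ _ _ Hc Hsum HI')|].
    intros t.
    assert (N1d : forall l, ~ derivable_pt_lim ReF t l) by (intros; apply (gen_nd _ _ _ _ _ Hc Hlam Hsum HR' HK Hgood)).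
    assert (N2d : forall l, ~ derivable_pt_lim ImF t l) by (intros; apply (gen_nd _ _ _ _ _ Hc Hlam Hsum HI' HK Hgood)).
    split; [intros [l Hd]; eapply N1d; eauto|]. split; [intros [l Hd]; eapply N2d; eauto|].
    intros [l1 [l2 [Hd _]]]. eapply N1d; eauto.
Qed.
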